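(* Let $n\ge 2$, $a\ge\sqrt{n-1}$, $f(x)=a|x^{(1)}|+\sum_{i=2}^n x^{(i)}$ on $\mathbb{R}^n$, and $0<c_1<c_2<1$. Let $x_0\in\mathbb{R}^n$ with $x_0^{(1)}\ne0$ and define $x_{k+1}=x_k+t_kd_k$ with $d_k=-\nabla f(x_k)$, where $A(t_k)$ and $W(t_k)$ hold for all $k\ge0$. Let $\tau=c_1+\frac{(n-1)(c_1-1)}{a^2}$. If $\tau>0$, then $f(x_k)$ is bounded below as $k\to\infty$.
   Context: $x^{(i)}$ is the $i$-th coordinate. At iteration $k$, the Armijo condition is $A(t)$: $f(x_k+td_k)\le f(x_k)+c_1t\nabla f(x_k)^Td_k$; the Wolfe condition is $W(t)$: $f$ is differentiable at $x_k+td_k$ and $\nabla f(x_k+td_k)^Td_k\ge c_2\nabla f(x_k)^Td_k$. *)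

(* Defs.v *)
(* Vectors of R^n are row vectors 'rV[R]_n;
   coordinate x^(i) (1-based in the paper) is x 0 (i-1). *)
From HB Require Import structures.
From mathcomp Require Import all_boot all_order all_algebra.
From mathcomp Require Import all_classical all_reals all_analysis.
Set Implicit Arguments. Unset Strict Implicit. Unset Printing Implicit Defensive.
Import Order.TTheory GRing.Theory Num.Theory.
Import numFieldNormedType.Exports.
Local Open Scope ring_scope.

Definition dotv (R : realType) (n : nat) (u v : 'rV[R]_n) : R :=
  \sum_(i < n) u 0 i * v 0 i.

Definition grad (R : realType) (n : nat) (f : 'rV[R]_n -> R) (x : 'rV[R]_n)
  : 'rV[R]_n := \row_(i < n) ('d f x (delta_mx 0 i : 'rV[R]_n)).

Definition fex (R : realType) (n : nat) (a : R) (x : 'rV[R]_n) : R :=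
  a * `| \sum_(i < n | val i == 0%N) x 0 i | + \sum_(i < n | val i != 0%N) x 0 i.

Definition armijo (R : realType) (n : nat) (f : 'rV[R]_n -> R) (c1 : R)
  (x d : 'rV[R]_n) (t : R) : Prop :=
  f (x + t *: d) <= f x + c1 * t * dotv (grad f x) d.

Definition wolfe (R : realType) (n : nat) (f : 'rV[R]_n -> R) (c2 : R)
  (x d : 'rV[R]_n) (t : R) : Prop :=
  differentiable f (x + t *: d) /\
  dotv (grad f (x + t *: d)) d >= c2 * dotv (grad f x) d.

(* Main.v *)
Require Import Defs.
Set Warnings "-notation-overridden,-ambiguous-paths,-notation-incompatible-prefix".
From HB Require Import structures.
From mathcomp Require Import all_boot all_order all_algebra.
From mathcomp Require Import all_classical all_reals all_analysis.
From mathcomp Require Import lra ring zify.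
Set Implicit Arguments. Unset Strict Implicit.
Import Order.TTheory GRing.Theory Num.Theory.
Import numFieldNormedType.Exports.
Local Open Scope ring_scope.

Section S.
Variables (R : realType) (n : nat) (a : R) (i0 : 'I_n).
Hypothesis hi0 : val i0 = 0%N.

Definition S1 (z : 'rV[R]_n) := \sum_(i < n | val i != 0%N) z 0 i.

Lemma fexE z : fex a z = a * `|z 0 i0| + S1 z.
Proof.
rewrite /fex (big_pred1 i0) // => i /=.
by rewrite -hi0; apply/eqP/eqP => [h|->//]; apply/val_inj.
Qed.

Lemma normr_diff (c : R) : c != 0 -> differentiable (@Num.norm _ R) c.
Proof.
move=> c0; apply/derivable1_diffP.
have -> : (@Num.norm _ R) = (id \max -%R).
  by apply/funext => x /=; rewrite maxrN.
apply: derivable_max => //.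
- by rewrite /= -subr_eq0 opprK -mulr2n mulrn_eq0 (negbTE c0).
exact: opp_continuous.
Qed.

Lemma S1_diff (y : 'rV[R]_n) : differentiable S1 y.
Proof.
have -> : S1 = \sum_(i < n) (fun z : 'rV[R]_n => if val i != 0%N then z 0 i else 0).
  apply/funext => z; rewrite fct_sumE /S1; exact: big_mkcond.
have H := (@differentiable_sum R 'rV[R]_n R n (fun i (z : 'rV[R]_n) => if val i != 0%N then z 0 i else 0) y).
apply: H => i; case: (val i != 0%N).
  exact: differentiable_coord.
exact: differentiable_cst.
Qed.

Lemma fex_diff (y : 'rV[R]_n) : y 0 i0 != 0 -> differentiable (fex a) y.
Proof.
move=> y0.
have -> : fex a = (cst a * (Num.norm \o (fun z : 'rV[R]_n => z 0 i0))) + S1.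
  by apply/funext => z; rewrite fexE.
apply: differentiableD; last exact: S1_diff.
apply: differentiableM; first exact: differentiable_cst.
apply: differentiable_comp; first exact: differentiable_coord.
exact: normr_diff.
Qed.

Lemma S1D u v : S1 (u + v) = S1 u + S1 v.
Proof. by rewrite /S1 -big_split; apply: eq_bigr => j _; rewrite mxE. Qed.

Lemma S1Z h v : S1 (h *: v) = h * S1 v.
Proof. by rewrite /S1 mulr_sumr; apply: eq_bigr => j _; rewrite mxE. Qed.

Lemma S1N v : S1 (- v) = - S1 v.
Proof. by rewrite -scaleN1r S1Z mulN1r. Qed.

Lemma S1delta i : S1 (delta_mx 0 i) = if i == i0 then 0 else 1.
Proof.
rewrite /S1; have Hv j : (val j != 0%N) = (j != i0).
  by rewrite -hi0 val_eqE.
case: eqP => [->|/eqP ii0].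
  by apply: big1 => j; rewrite Hv mxE eqxx /= => /negbTE ->.
rewrite (bigD1 i) ?Hv //= big1 ?addr0; first by rewrite mxE !eqxx.
by move=> j /andP[_ ji]; rewrite mxE eqxx /= (negbTE ji).
Qed.

Lemma sg_near (c h : R) : `|h| < `|c| -> Num.sg (h + c) = Num.sg c.
Proof.
move=> hc; have [c0|c0|c0] := ltrgtP c 0.
- rewrite (ltr0_sg c0) ltr0_sg //; move: hc; rewrite (ltr0_norm c0) => hc; move: (ler_norm h); lra.
- rewrite (gtr0_sg c0) gtr0_sg //; move: hc; rewrite (gtr0_norm c0) => hc.
  move: (ler_norm (-h)); rewrite normrN; lra.
- by move: hc; rewrite c0 normr0 ltNge normr_ge0.
Qed.

Lemma grad_val (y : 'rV[R]_n) : y 0 i0 != 0 ->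
  grad (fex a) y = \row_i (if i == i0 then a * Num.sg (y 0 i0) else 1).
Proof.
move=> y0; apply/rowP => i; rewrite !mxE -deriveE; last exact: fex_diff.
rewrite /derive; apply: lim_near_cst => //.
have hc : 0 < `|y 0 i0| by rewrite normr_gt0.
have [->|ii0] := eqVneq i i0.
  near=> h.
  have h0 : h != 0 by near: h; exact: nbhs_dnbhs_neq.
  have hl : `|h| < `|y 0 i0|.
    by near: h; exact: dnbhs0_lt.
  rewrite /= !fexE S1D S1Z S1delta !mxE !eqxx /= mulr1 mulr0 !normrEsg sg_near //.
  have -> : forall z : R, h^-1 *: z = h^-1 * z by [].
  by field.
near=> h.
have h0 : h != 0 by near: h; exact: nbhs_dnbhs_neq.
rewrite /= !fexE S1D S1Z S1delta !mxE eqxx (negbTE ii0) eq_sym (negbTE ii0) /= mulr0 add0r mulr1.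
have -> : forall z : R, h^-1 *: z = h^-1 * z by [].
by field.
Unshelve. all: by end_near.
Qed.

Lemma fex_ndiff (y : 'rV[R]_n) : 0 < a -> y 0 i0 = 0 -> ~ differentiable (fex a) y.
Proof.
move=> a0 y0 dF.
pose q := fun h : R => h^-1 *: ((fex a \o shift y) (h *: 'e_i0) - fex a y).
have qE h : q h = h^-1 * (a * `|h|).
  rewrite /q /= !fexE S1D S1Z S1delta !mxE !eqxx /= y0.
  by rewrite mulr1 addr0 normr0 !mulr0 !add0r addrK.
have Eq h : h^-1 *: ((fex a \o shift y) (h *: - 'e_i0) - fex a y) = q h.
  rewrite qE /= !fexE S1D S1Z S1N S1delta !mxE !eqxx /= y0.
  by rewrite mulrN1 addr0 normrN normr0 oppr0 !mulr0 !add0r addrK.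
have D1 : 'D_('e_i0) (fex a) y = 'd (fex a) y 'e_i0 by rewrite deriveE.
have D2 : 'D_(- 'e_i0) (fex a) y = - 'd (fex a) y 'e_i0.
  by rewrite deriveE // linearN.
have D12 : 'D_(- 'e_i0) (fex a) y = 'D_('e_i0) (fex a) y.
  rewrite /derive (_ : (fun h : R => h^-1 *: ((fex a \o shift y) (h *: - 'e_i0) - fex a y)) = q) //.
  by apply/funext => r; rewrite Eq.
have L0 : 'D_('e_i0) (fex a) y = 0.
  move: D12; rewrite D2 D1 => /eqP; rewrite eq_sym -subr_eq0 opprK -mulr2n mulrn_eq0 /=.
  by move/eqP.
have dv : derivable (fex a) y 'e_i0 by exact: diff_derivable.
have cq : (q @ 0^' --> (0 : R))%classic.
  by rewrite -[X in (_ --> X)%classic]L0; exact: dv.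
have Hn : (\forall t \near (0:R)^', `|q t| < a)%classic by exact: (cvgr0_norm_lt _ cq).
case: Hn => e /= e0 He.
have e20 : 0 < e / 2 by rewrite divr_gt0.
have : `|q (e / 2)| < a.
  apply: He; last by rewrite gt_eqF.
  rewrite /ball_ /= sub0r normrN gtr0_norm //; lra.
rewrite qE (gtr0_norm e20) mulrCA mulVf ?gt_eqF // mulr1 gtr0_norm //.
by rewrite ltxx.
Qed.

Lemma valE (j : 'I_n) : (val j != 0%N) = (j != i0).
Proof. by rewrite -hi0 val_eqE. Qed.

Lemma sum0E (z : 'rV[R]_n) : \sum_(i < n | val i == 0%N) z 0 i = z 0 i0.
Proof.
rewrite (big_pred1 i0) // => i /=.
by rewrite -hi0 val_eqE.
Qed.

Lemma cnt : \sum_(i < n | i != i0) (1:R) = (n.-1)%:R.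
Proof.
have H : \sum_(i < n) (1:R) = n%:R by rewrite sumr_const card_ord.
move: H; rewrite (bigD1 i0) //= => H.
have n0 : (0 < n)%N := leq_ltn_trans (leq0n _) (ltn_ord i0).
have E : n%:R = (n.-1)%:R + 1 :> R by rewrite natr1 prednK.
by move: H; rewrite E addrC => /addIr.
Qed.

Lemma S1g (p : R) : S1 (\row_i (if i == i0 then p else 1)) = (n.-1)%:R.
Proof.
rewrite /S1 -cnt; rewrite (eq_bigl (fun i => i != i0)); last by move=> i; rewrite valE.
by apply: eq_bigr => i /negbTE H; rewrite mxE H.
Qed.

Lemma dotE (p q : R) : dotv (\row_i (if i == i0 then p else 1)) (- \row_i (if i == i0 then q else 1))
  = - (p * q + (n.-1)%:R).
Proof.
rewrite /dotv (bigD1 i0) //= !mxE eqxx -cnt opprD -sumrN.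
congr (_ + _); first by rewrite mulrN.
by apply: eq_bigr => i /negbTE H; rewrite !mxE H mulrN mul1r.
Qed.
End S.
Lemma key (R : realFieldType) (a N c1 T t w v S S' : R) :
  0 < a -> 0 <= N -> 0 < T -> T * a^+2 = c1 * a^+2 + N * (c1 - 1) ->
  t * a = w + v ->
  a * v + S' <= a * w + S - c1 * t * (a^+2 + N) -> S' = S - t * N ->
  S - N / (a * T) * w <= S' - N / (a * T) * v.
Proof.
move=> a0 N0 T0 hT hta arm hS.
have h1 : a^+2 * v <= a^+2 * w - T * a^+2 * (w + v).
  have H : 0 <= a * ((a * w + S - c1 * t * (a^+2 + N)) - (a * v + S')).
    by apply: mulr_ge0; [exact: ltW | rewrite subr_ge0].
  have E : c1 * (a^+2 + N) = T * a^+2 + N by rewrite hT; ring.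
  have E4 : a * ((a * w + S - c1 * t * (a^+2 + N)) - (a * v + S')) =
     a^+2 * w - a^+2 * v + (t * a) * N - (t * a) * (c1 * (a^+2 + N)) by rewrite hS; ring.
  move: H; rewrite E4 E hta => H.
  rewrite -subr_ge0.
  have -> : a ^+ 2 * w - T * a ^+ 2 * (w + v) - a^+2 * v =
    a ^+ 2 * w - a ^+ 2 * v + (w + v) * N - (w + v) * (T * a ^+ 2 + N) by ring.
  exact: H.
have a2 : 0 < a^+2 by rewrite exprn_gt0.
have h2 : v <= w - T * (w + v).
  rewrite -(ler_pM2l a2); move: h1; rewrite mulrBr [_ * (T * _)]mulrC mulrA. lra.
have hC : N / (a * T) * (T * (w + v)) = t * N.
  by rewrite -hta; field; rewrite !gt_eqF.
have C0 : 0 <= N / (a * T) by rewrite divr_ge0 // mulr_ge0 // ltW.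
have : N / (a * T) * (T * (w + v)) <= N / (a * T) * (w - v).
  by rewrite ler_wpM2l //; lra.
rewrite hC hS; lra.
Qed.

Lemma step (R : realFieldType) (a N c1 c2 T t u u' S S' s s' : R) :
  0 < a -> 0 <= N -> 0 < T -> c2 < 1 -> T * a^+2 = c1 * a^+2 + N * (c1 - 1) ->
  (s = 1 \/ s = -1) -> (s' = 1 \/ s' = -1) ->
  u' = u + t * - (a * s) -> S' = S + t * - N ->
  `|u| = s * u -> `|u'| = s' * u' ->
  c2 * - (a * s * (a * s) + N) <= - (a * s' * (a * s) + N) ->
  a * `|u'| + S' <= a * `|u| + S + c1 * t * - (a * s * (a * s) + N) ->
  S - N / (a * T) * `|u| <= S' - N / (a * T) * `|u'|.
Proof.
move=> a0 N0 T0 c21 hT hs hs' hu hS nu nu' wo ar.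
have a2 : 0 < a * a by rewrite mulr_gt0.
have [E|E] : s' = s \/ s' = - s.
  by case: hs => ->; case: hs' => ->; rewrite ?opprK; auto.
  exfalso; move: wo; rewrite E.
  have -> : a * s * (a * s) = a * a by case: hs => ->; ring.
  nra.
have ss : a * s * (a * s) = a ^+ 2 by case: hs => ->; ring.
have ss' : a * s' * (a * s) = - a ^+ 2 by rewrite E; case: hs => ->; ring.
apply: (@key R a N c1 T t `|u| `|u'| S S' a0 N0 T0 hT).
- rewrite nu nu' E hu; case: hs => ->; ring.
- by move: ar; rewrite ss mulrN; lra.
- by rewrite hS; ring.
Qed.

Unset Implicit Arguments. Set Strict Implicit.

Theorem corollary1 (R : realType) (n : nat) (a c1 c2 : R)
  (x : nat -> 'rV[R]_n) (t : nat -> R) :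
  (2 <= n)%N ->
  Num.sqrt (n.-1)%:R <= a ->
  0 < c1 -> c1 < c2 -> c2 < 1 ->
  (\sum_(i < n | val i == 0%N) x 0%N 0 i) != 0 ->
  (forall k, x k.+1 = x k + t k *: (- grad (fex a) (x k))) ->
  (forall k, armijo (fex a) c1 (x k) (- grad (fex a) (x k)) (t k)) ->
  (forall k, wolfe (fex a) c2 (x k) (- grad (fex a) (x k)) (t k)) ->
  0 < c1 + (n.-1)%:R * (c1 - 1) / a ^+ 2 ->
  exists M : R, forall k, M <= fex a (x k).
Proof.
move=> n2 ha c10 c12 c21 x00 xS arm wol tau.
have n0 : (0 < n)%N by lia.
pose i0 : 'I_n := Ordinal n0.
have hi0 : val i0 = 0%N by [].
have N0 : 0 < (n.-1)%:R :> R by rewrite ltr0n; lia.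
have a0 : 0 < a by apply: lt_le_trans ha; rewrite sqrtr_gt0.
set N : R := (n.-1)%:R in N0 tau *.
set T := c1 + N * (c1 - 1) / a ^+ 2 in tau.
have hT : T * a^+2 = c1 * a^+2 + N * (c1 - 1).
  by rewrite /T; field; rewrite gt_eqF.
pose C := N / (a * T).
have nz : forall k, x k 0 i0 != 0.
  case=> [|k]; first by rewrite -(sum0E hi0).
  apply/eqP => h; have [d _] := wol k; rewrite -xS in d.
  exact: (@fex_ndiff R n a i0 hi0 _ a0 h d).
have gk k : grad (fex a) (x k) = \row_i (if i == i0 then a * Num.sg (x k 0 i0) else 1).
  exact: (grad_val a hi0 (nz k)).
have sgE k : Num.sg (x k 0 i0) = 1 \/ Num.sg (x k 0 i0) = -1.
  have := nz k; case: (ltrgtP (x k 0 i0) 0) => h _.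
  - by right; rewrite ltr0_sg.
  - by left; rewrite gtr0_sg.
  - by move: (nz k); rewrite h eqxx.
have stepk k : S1 (x k) - C * `|x k 0 i0| <= S1 (x k.+1) - C * `|x k.+1 0 i0|.
  have ar := arm k; have [_ wo] := wol k.
  rewrite /armijo -xS !gk !(fexE a hi0) in ar.
  rewrite -xS !gk !(dotE i0) in wo.
  rewrite !(dotE i0) in ar.
  apply: (@step R a N c1 c2 T (t k) (x k 0 i0) (x k.+1 0 i0) (S1 (x k)) (S1 (x k.+1))
     (Num.sg (x k 0 i0)) (Num.sg (x k.+1 0 i0)) a0 (ltW N0) tau c21 hT (sgE k) (sgE k.+1)).
  - by rewrite xS gk !mxE eqxx.
  - by rewrite xS gk S1D S1Z S1N (S1g hi0).
  - exact: normrEsg.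
  - exact: normrEsg.
  - exact: wo.
  - exact: ar.
have C0 : 0 <= C by rewrite /C divr_ge0 ?ltW // mulr_gt0.
exists (S1 (x 0%N) - C * `|x 0%N 0 i0|) => k.
have Hk : S1 (x 0%N) - C * `|x 0%N 0 i0| <= S1 (x k) - C * `|x k 0 i0|.
  elim: k => [|k IH] //; exact: le_trans IH (stepk k).
apply: (le_trans Hk); rewrite (fexE a hi0).
have : 0 <= a * `|x k 0 i0| by apply: mulr_ge0; [exact: ltW | exact: normr_ge0].
have : 0 <= C * `|x k 0 i0| by apply: mulr_ge0; [exact: C0 | exact: normr_ge0].
lra.
Qed.
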